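(* Let $\sigma\ge\tilde\sigma\ge1/4$ and let $\Lambda$ be a finite subset of $\mathbb{Z}^\nu$. Suppose $T(m,n)=D(m,n)+R(m,n)$ for $m,n\in\Lambda$, where $D$ is a diagonal matrix. Suppose further that for each $n\in\Lambda$ there exist numbers $l_n>0$, $0\le\mu_n\le\sigma-\tilde\sigma$, $C_n>0$ and a set $U(n)\subset\Lambda$ with $n\in U(n)$ such that: $T_{U(n)}^{-1}$ exists and $\|T_{U(n)}^{-1}\|_{\tilde\sigma+\mu_n,c}\le C_n$; $\mathrm{dist}(n,\Lambda\setminus U(n))\ge l_n$; and $C_ne^{-\mu_nl_n^c}\|R\|_{\sigma,c}\le\frac12$. Then $T_\Lambda$ is invertible and $\|T_\Lambda^{-1}\|_{\tilde\sigma,c}\le(1+w_{\tilde\sigma,c}(0))C$, where $C:=\sup_{n\in\Lambda}C_n$.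
   Context: $c=0.01$, $|\cdot|$ the maximum norm on $\mathbb{Z}^\nu$ (distances taken in it). $D_N:=\max(D_{\nu,c},D_{\nu,1})$ where $D_{\nu,c}=\sup_{n\in\mathbb{Z}^\nu,\sigma\ge1/4}\sum_m\frac{e^{\sigma|n|^c}}{e^{\sigma|m|^c}e^{\sigma|n-m|^c}}$ and $D_{\nu,1}=\sup_{n,\sigma\ge1/4}\sum_m\frac{(1+|n|)^{\nu+1}e^{\sigma|n|}}{(1+|m|)^{\nu+1}e^{\sigma|m|}(1+|n-m|)^{\nu+1}e^{\sigma|n-m|}}$; $w_{\sigma,c}(n)=D_Ne^{\sigma|n|^c}$. For a matrix $A$ indexed by a subset of $\mathbb{Z}^\nu$ (extended by zero), $\|A\|_{\sigma,c}:=\sup_n\sum_mw_{\sigma,c}(m-n)|A(m,n)|$. For $S\subset\Lambda$, $T_S$ denotes the restriction $(T(m,n))_{m,n\in S}$, and $T_S^{-1}$ its inverse as a matrix on $S$. *)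

(* Defs.v *)
From HB Require Import structures.
From mathcomp Require Import all_boot all_order all_algebra.
From mathcomp Require Import all_classical all_reals all_analysis.
Set Implicit Arguments. Unset Strict Implicit. Unset Printing Implicit Defensive.
Import Order.TTheory GRing.Theory Num.Theory.
Local Open Scope ring_scope.

Definition pt (nu : nat) := {ffun 'I_nu -> int}.
Definition ptsub nu (m n : pt nu) : pt nu := [ffun i => m i - n i].
Definition maxnorm nu (m : pt nu) : nat := \max_(i < nu) absz (m i).
Definition rnorm (R : realType) nu (m : pt nu) : R := (maxnorm m)%:R.

Definition cexp (R : realType) : R := 100^-1.

Definition Dc_term (R : realType) nu (sigma : R) (n m : pt nu) : R :=
  expR (sigma * powR (rnorm R n) (cexp R)) /
  (expR (sigma * powR (rnorm R m) (cexp R)) *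
   expR (sigma * powR (rnorm R (ptsub n m)) (cexp R))).

Definition D1_term (R : realType) nu (sigma : R) (n m : pt nu) : R :=
  ((1 + rnorm R n) ^+ nu.+1 * expR (sigma * rnorm R n)) /
  (((1 + rnorm R m) ^+ nu.+1 * expR (sigma * rnorm R m)) *
   ((1 + rnorm R (ptsub n m)) ^+ nu.+1 * expR (sigma * rnorm R (ptsub n m)))).

Definition D_nu_c (R : realType) (nu : nat) : \bar R :=
  ereal_sup [set x | exists (n : pt nu) (sigma : R), 4^-1 <= sigma /\
     x = esum [set: pt nu] (fun m => (Dc_term sigma n m)%:E)].
Definition D_nu_1 (R : realType) (nu : nat) : \bar R :=
  ereal_sup [set x | exists (n : pt nu) (sigma : R), 4^-1 <= sigma /\
     x = esum [set: pt nu] (fun m => (D1_term sigma n m)%:E)].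

Definition D_N (R : realType) (nu : nat) : R := fine (Order.max (D_nu_c R nu) (D_nu_1 R nu)).

Definition w (R : realType) nu (sigma : R) (n : pt nu) : R :=
  D_N R nu * expR (sigma * powR (rnorm R n) (cexp R)).

(* ||A||_{sigma,c} for a matrix A indexed by the finite set S (a duplicate-free
   list), extended by zero: sup_{n in S} sum_{m in S} w(m-n) |A(m,n)| *)
Definition mnorm (R : realType) nu (sigma : R) (S : seq (pt nu))
    (A : pt nu -> pt nu -> R) : R :=
  \big[Order.max/0]_(n <- S) \sum_(m <- S) w sigma (ptsub m n) * `|A m n|.

Definition inverse_on (R : realType) nu (S : seq (pt nu))
    (T B : pt nu -> pt nu -> R) : Prop :=
  forall m n, m \in S -> n \in S ->
    \sum_(k <- S) T m k * B k n = (m == n)%:R /\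
    \sum_(k <- S) B m k * T k n = (m == n)%:R.

(* Main.v *)
Require Import Defs.
From HB Require Import structures.
From mathcomp Require Import all_boot all_order all_algebra.
From mathcomp Require Import all_classical all_reals all_analysis.
From mathcomp Require Import ring lra zify.
Import Order.TTheory GRing.Theory Num.Theory.
Local Open Scope ring_scope.
Set Implicit Arguments. Unset Strict Implicit.

Section Norms.
Variable nu : nat.
Implicit Types m n k : pt nu.

Lemma ptsubK n m : ptsub n (ptsub n m) = m.
Proof. by apply/ffunP=> i; rewrite !ffunE subKr. Qed.

Lemma maxnorm_coord m i : (`|m i| <= maxnorm m)%N.
Proof. by rewrite /maxnorm (bigD1 i) //= leq_maxl. Qed.

Lemma maxnorm_le m N : (forall i, `|m i| <= N)%N -> (maxnorm m <= N)%N.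
Proof. by move=> H; apply/bigmax_leqP => i _; exact: H. Qed.

Lemma maxnorm_tri m k n :
  (maxnorm (ptsub m n) <= maxnorm (ptsub m k) + maxnorm (ptsub k n))%N.
Proof.
apply: maxnorm_le => i; rewrite ffunE.
apply: leq_trans (leqD_dist _ (k i) _) _; apply: leq_add.
- by have := maxnorm_coord (ptsub m k) i; rewrite ffunE.
- by have := maxnorm_coord (ptsub k n) i; rewrite ffunE.
Qed.

Lemma maxnorm_sym m n : maxnorm (ptsub m n) = maxnorm (ptsub n m).
Proof. by apply: eq_bigr => i _; rewrite !ffunE distnC. Qed.

Lemma maxnorm_split n m : (maxnorm n <= maxnorm m + maxnorm (ptsub n m))%N.
Proof.
apply: maxnorm_le => i.
have := leqD_dist (n i) (m i) 0; rewrite !subr0 addnC => H.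
apply: leq_trans H _; apply: leq_add.
- exact: maxnorm_coord.
- by have := maxnorm_coord (ptsub n m) i; rewrite ffunE.
Qed.

Lemma maxnorm0 : maxnorm (0 : pt nu) = 0%N.
Proof. by apply/eqP; rewrite -leqn0; apply: maxnorm_le => i; rewrite ffunE. Qed.

Lemma ptsub0 n : ptsub n 0 = n.
Proof. by apply/ffunP=> i; rewrite !ffunE subr0. Qed.

End Norms.

Section Reals.
Variable R : realType.

Lemma cexp_gt0 : 0 < cexp R. Proof. by rewrite /cexp invr_gt0. Qed.
Lemma cexp_lt1 : cexp R < 1. Proof. by rewrite /cexp invf_lt1 // ltr1n. Qed.

Lemma powR_anti {x y e : R} : 0 < x -> x <= y -> e < 0 -> y `^ e <= x `^ e.
Proof.
move=> x0 xy e0; have y0 : 0 < y := lt_le_trans x0 xy.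
have [f -> f0] : exists2 f, e = - f & 0 < f by exists (- e); rewrite ?opprK ?oppr_gt0.
rewrite !powRN.
rewrite ler_pV2 ?inE ?unitfE ?powR_gt0 ?gt_eqF //.
have xn : x \is Num.nneg by rewrite qualifE /= ltW.
have yn : y \is Num.nneg by rewrite qualifE /= ltW.
rewrite ?powR_gt0 //; first by apply: ge0_ler_powR => //; exact: ltW.
all: exact: powR_gt0.
Qed.

Lemma powR_gain {c a b : R} : 0 < c -> c < 1 -> 0 <= a -> a <= b ->
  (a + b) `^ c <= 2 `^ (c - 1) * a `^ c + b `^ c.
Proof.
move=> c0 c1 a0 ab.
have [->|a0'] := eqVneq a 0.
  by rewrite powR0 ?gt_eqF // mulr0 !add0r.
have apos : 0 < a by rewrite lt_def a0' a0.
have bpos : 0 < b by apply: lt_le_trans ab.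
have e0 : c - 1 < 0 by rewrite subr_lt0.
rewrite -(mulr_powRB1 (addr_ge0 a0 (ltW bpos)) c0) mulrDl.
apply: lerD.
- rewrite -(mulr_powRB1 a0 c0) mulrCA; apply: ler_wpM2l; first exact: a0.
  rewrite -(powRM _ (ler0n _ 2) a0); apply: powR_anti => //; first by rewrite mulr_gt0.
  by rewrite mulr2n mulrDl mul1r lerD2l.
- rewrite -(mulr_powRB1 (ltW bpos) c0); apply: ler_wpM2l; first exact: ltW.
  by apply: powR_anti => //; rewrite lerDr.
Qed.

Lemma two_powR_lt1 (c : R) : c < 1 -> 2 `^ (c - 1) < 1.
Proof.
move=> c1; rewrite /powR pnatr_eq0 /= expR_lt1 pmulr_llt0 ?subr_lt0 //.
by rewrite ln_gt0 // ltr1n.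
Qed.

Lemma powR_subadd (c a b : R) : 0 < c -> c < 1 -> 0 <= a -> 0 <= b ->
  (a + b) `^ c <= a `^ c + b `^ c.
Proof.
move=> c0 c1 a0 b0.
have H (x y : R) : 0 <= x -> x <= y -> (x + y) `^ c <= x `^ c + y `^ c.
  move=> x0 xy; have G := powR_gain c0 c1 x0 xy; apply: (le_trans G); rewrite lerD2r.
  by rewrite ler_piMl ?powR_ge0 // ltW // two_powR_lt1.
have [ab|ba] := leP a b; first exact: H.
by rewrite addrC [X in _ <= X]addrC; apply: H => //; apply: ltW.
Qed.

End Reals.

Section Lattice.
Variable R : realType.

Lemma sum_sub_le (T : eqType) (s t : seq T) (F : T -> R) :
  uniq s -> {subset s <= t} -> uniq t -> (forall x, x \in t -> 0 <= F x) ->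
  \sum_(x <- s) F x <= \sum_(x <- t) F x.
Proof.
move=> us st ut F0; rewrite [X in _ <= X](bigID (mem s)) /=.
have -> : \sum_(x <- t | x \in s) F x = \sum_(x <- s) F x.
  rewrite -big_filter; apply: perm_big; apply: uniq_perm => //.
  - exact: filter_uniq.
  - by move=> x; rewrite mem_filter; case: (boolP (x \in s)) => // /st ->.
rewrite lerDl; rewrite big_seq_cond; apply: sumr_ge0 => x /andP[xt _]; exact: F0.
Qed.

Definition hp (p : R) (k : nat) : R := expR (- p * ln (k.+1%:R : R)).

Lemma hp_ge0 p k : 0 <= hp p k. Proof. exact: expR_ge0. Qed.

Lemma hp_anti p a b : 0 <= p -> (b <= a)%N -> hp p a <= hp p b.
Proof.
move=> p0 ba; rewrite /hp ler_expR !mulNr lerN2; apply: ler_wpM2l => //.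
have pa : (a.+1%:R : R) \in Num.pos by rewrite qualifE /= ltr0n.
have pb : (b.+1%:R : R) \in Num.pos by rewrite qualifE /= ltr0n.
by rewrite (ler_ln pb pa) ler_nat.
Qed.

Lemma hp0 p : hp p 0 = 1.
Proof. by rewrite /hp ln1 mulr0 expR0. Qed.

Lemma ln_gap {k : nat} : (0 < k)%N -> (k.+1%:R : R)^-1 <= ln (k.+1%:R : R) - ln k%:R.
Proof.
move=> k0.
have kp : (0:R) < k%:R by rewrite ltr0n.
have k1p : (0:R) < k.+1%:R by rewrite ltr0n.
have e : (k%:R / k.+1%:R : R) = 1 + - (k.+1%:R)^-1.
  by rewrite -[k.+1%:R]nat1r; field; rewrite nat1r gt_eqF.
have h1 : -1 < - (k.+1%:R : R)^-1.
  rewrite ltrN2 invf_lt1 // ltr1n ltnS //.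
have := le_ln1Dx h1; rewrite -e ln_div ?inE //.
move: (ln (k%:R : R)) (ln (k.+1%:R : R)) ((k.+1%:R : R)^-1) => x y z; lra.
Qed.

Lemma hp_tele (r : R) (k : nat) : 0 < r -> (0 < k)%N ->
  r * hp (r + 1) k <= expR (- r * ln k%:R) - expR (- r * ln k.+1%:R).
Proof.
move=> r0 k0; have g := ln_gap k0.
set v := ln (k.+1%:R : R) in g *; set u := ln (k%:R : R) in g *.
have E1 : expR (- r * u) = expR (- r * v) * expR (r * (v - u)).
  by rewrite -expRD; congr expR; ring.
have E2 : hp (r + 1) k = expR (- r * v) * (k.+1%:R)^-1.
  have -> : (k.+1%:R : R)^-1 = expR (- v) by rewrite expRN lnK // qualifE /= ltr0n.
  by rewrite /hp -expRD -/v; congr expR; ring.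
have B := expR_ge1Dx (r * (v - u)).
have X0 : 0 < expR (- r * v) := expR_gt0 _.
rewrite E1 E2; set X := expR (- r * v) in X0 *; set Y := expR (r * (v - u)) in B *.
set i := (k.+1%:R : R)^-1 in g *.
have : 0 <= (Y - 1 - r * (v - u)) * X by apply: mulr_ge0; lra.
have : 0 <= (v - u - i) * (r * X) by apply: mulr_ge0; [lra | apply: mulr_ge0; lra].
nra.
Qed.

Lemma hp_sum (r : R) N : 0 < r -> \sum_(k < N.+1) hp (r + 1) k <= 1 + r^-1.
Proof.
move=> r0; rewrite big_ord_recl /= hp0 lerD2l.
have H : r * \sum_(i < N) hp (r + 1) (bump 0 i) <= 1.
  rewrite mulr_sumr.
  apply: (@le_trans _ _ (\sum_(i < N) (expR (- r * ln i.+1%:R) - expR (- r * ln i.+2%:R)))).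
    by apply: ler_sum => i _; apply: hp_tele.
  rewrite -(big_mkord xpredT (fun i => expR (- r * ln i.+1%:R) - expR (- r * ln i.+2%:R))).
  set f := (fun i : nat => expR (- r * ln (i.+1%:R : R))).
  have T := telescope_sumr f (leq0n N).
  have E : \sum_(0 <= i < N) (f i - f i.+1) = f 0%N - f N.
    rewrite -[LHS]opprK -sumrN.
    under eq_bigr do rewrite opprB.
    by rewrite T opprB.
  rewrite E /f /= ln1 mulr0 expR0 lerBlDr lerDl; exact: expR_ge0.
by rewrite -(ler_pM2l r0) mulfV ?gt_eqF.
Qed.

End Lattice.

Section Box.
Variable R : realType.

Definition Fw nu (m : pt nu) : R := ((1 + rnorm R m) ^+ nu.+1)^-1.

Lemma Fw_ge0 nu (m : pt nu) : 0 <= Fw m.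
Proof. by rewrite /Fw invr_ge0 exprn_ge0 // addr_ge0 // ler0n. Qed.

Lemma Fw_prod nu (m : pt nu) :
  Fw m <= \prod_(i < nu) hp (nu%:R^-1 + 1) `|m i|.
Proof.
case: nu m => [|n] m.
  rewrite big_ord0 /Fw expr1 invf_le1 ?lerDl ?ler0n //.
  by apply: lt_le_trans (_ : 0 < 1) _; rewrite ?lerDl ?ler0n.
set p := (n.+1%:R^-1 + 1 : R).
apply: (@le_trans _ _ (\prod_(i < n.+1) hp p (maxnorm m))); last first.
  apply: ler_prod => i _; rewrite hp_ge0 /=; apply: hp_anti; last exact: maxnorm_coord.
  by rewrite /p addr_ge0 // invr_ge0 ler0n.
rewrite prodr_const card_ord /hp -expRM_natr.
have -> : - p * ln ((maxnorm m).+1%:R : R) * n.+1%:R = - (ln ((maxnorm m).+1%:R : R) * n.+2%:R).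
  rewrite /p -[n.+2]addn1 natrD; field; by rewrite nat1r pnatr_eq0.
have -> : expR (- (ln ((maxnorm m).+1%:R : R) * n.+2%:R)) = (((maxnorm m).+1%:R : R) ^+ n.+2)^-1.
  by rewrite expRN expRM_natr lnK // qualifE /= ltr0n.
by rewrite /Fw /rnorm nat1r.
Qed.

Lemma lattice_sum nu (s : seq (pt nu)) : uniq s ->
  \sum_(m <- s) Fw m <= (2 * (1 + nu%:R)) ^+ nu.
Proof.
move=> us.
set N := \max_(m <- s) maxnorm m.
have HN : forall m, m \in s -> (maxnorm m <= N)%N.
  by move=> m ms; rewrite /N (big_rem m ms) /= leq_maxl.
pose J := ('I_N.+1 * bool)%type.
pose enc (f : {ffun 'I_nu -> J}) : pt nu :=
  [ffun i => if (f i).2 then - (((f i).1 : nat)%:Z) else ((f i).1 : nat)%:Z].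
pose dec (m : pt nu) : {ffun 'I_nu -> J} := [ffun i => (inord `|m i|, m i < 0)].
have encK : forall m, m \in s -> enc (dec m) = m.
  move=> m ms; apply/ffunP => i; rewrite !ffunE /=.
  have lt : (`|m i| < N.+1)%N by rewrite ltnS (leq_trans (maxnorm_coord m i)) ?HN.
  rewrite inordK // abszE.
  case: (ltrP (m i) 0) => h; first by rewrite ltr0_norm // opprK.
  by rewrite ger0_norm.
set p := (nu%:R^-1 + 1 : R).
have -> : \sum_(m <- s) Fw m = \sum_(f <- map dec s) Fw (enc f).
  by rewrite big_map; apply: eq_big_seq => m ms; rewrite encK.
apply: (@le_trans _ _ (\sum_(f : {ffun 'I_nu -> J}) Fw (enc f))).
  apply: sum_sub_le.
  - rewrite map_inj_in_uniq // => x y xs ys e.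
    by rewrite -(encK x xs) -(encK y ys) e.
  - by move=> x _; rewrite mem_index_enum.
  - exact: index_enum_uniq.
  - by move=> x _; exact: Fw_ge0.
apply: (@le_trans _ _ (\sum_(f : {ffun 'I_nu -> J}) \prod_(i < nu) hp p (f i).1)).
  apply: ler_sum => f _; apply: le_trans (Fw_prod _) _.
  apply: ler_prod => i _; rewrite hp_ge0 /= /enc ffunE.
  by case: (f i).2; rewrite ?abszN absz_nat.
rewrite -(bigA_distr_bigA (fun (i : 'I_nu) (j : J) => hp p j.1)) /=.
rewrite prodr_const card_ord.
case: (posnP nu) => [->|nu0]; first by rewrite !expr0.
apply: lerXn2r; rewrite ?qualifE /= ?sumr_ge0 //; first by move=> j _; exact: hp_ge0.
have hs : \sum_(i < N.+1) hp p i <= 1 + nu%:R.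
  have := @hp_sum R (nu%:R^-1) N; rewrite invrK; apply.
  by rewrite invr_gt0 ltr0n.
have -> : \sum_(j : J) hp p j.1 = \sum_(k < N.+1) \sum_(b : bool) hp p k.
  by rewrite pair_big /=.
under eq_bigr do rewrite big_bool /=.
rewrite big_split /=; move: hs; set S := \sum_(i < N.+1) hp p i; lra.
Qed.

Lemma lattice_sum_tr nu (n : pt nu) (s : seq (pt nu)) : uniq s ->
  \sum_(m <- s) Fw (ptsub n m) <= (2 * (1 + nu%:R)) ^+ nu.
Proof.
move=> us; rewrite -(big_map (ptsub n) xpredT (@Fw nu)); apply: lattice_sum.
rewrite map_inj_in_uniq // => x y _ _ e.
by rewrite -(ptsubK n x) e ptsubK.
Qed.

End Box.

Section Decay.
Variable R : realType.

Lemma inv_bound (x K Y : R) : 0 < K -> 0 < Y -> Y <= K * expR x ->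
  expR (- x) <= K * Y^-1.
Proof.
move=> K0 Y0 H.
rewrite expRN -[K * Y^-1]invrK invfM invrK.
rewrite ler_pV2 ?inE ?unitfE ?expR_gt0 ?mulr_gt0 ?invr_gt0 ?gt_eqF ?andbT //.
  by rewrite ler_pdivrMl.
  exact: expR_gt0.
by rewrite mulr_gt0 ?invr_gt0.
Qed.

Lemma pow_split (t : R) q : 0 <= t -> (1 + t) ^+ q <= 2 ^+ q * (1 + t ^+ q).
Proof.
move=> t0; have [t1|t1] := lerP t 1.
- apply: (@le_trans _ _ (2 ^+ q)).
    by apply: lerXn2r; rewrite ?qualifE /= ?addr_ge0 //; lra.
  by rewrite ler_peMr ?exprn_ge0 // lerDl exprn_ge0.
- apply: (@le_trans _ _ ((2 * t) ^+ q)).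
    by apply: lerXn2r; rewrite ?qualifE /= ?addr_ge0 ?mulr_ge0 //; lra.
  by rewrite exprMn ler_pM2l ?exprn_gt0 // lerDr.
Qed.

Lemma decay (k : R) (q : nat) : 0 < k -> exists2 K, 0 < K &
  forall t, 0 <= t -> expR (- (k * t `^ cexp R)) <= K * ((1 + t) ^+ q.+1)^-1.
Proof.
move=> k0.
have [M EM] : exists M, M.+1 = (100 * q.+1)%N by exists (99 + 100 * q)%N; lia.
set F := (M.+1`!%:R : R).
have F0 : 0 < F by rewrite ltr0n fact_gt0.
set K0 := 1 + F / k ^+ M.+1.
have kM : 0 < k ^+ M.+1 by rewrite exprn_gt0.
have K0p : 0 < K0 by rewrite /K0 ltr_wpDr ?divr_ge0 ?ltW.
exists (2 ^+ q.+1 * K0); first by rewrite mulr_gt0 ?exprn_gt0.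
move=> t t0.
have x0 : 0 <= k * t `^ cexp R by apply: mulr_ge0; [exact: ltW | exact: powR_ge0].
have E := expR_ge1Dxn M x0.
have P : (t `^ cexp R) ^+ M.+1 = t ^+ q.+1.
  rewrite -powR_mulrn; last exact: powR_ge0.
  rewrite -powRrM -powR_mulrn //; congr powR.
  by rewrite EM natrM /cexp mulKf.
apply: inv_bound; [by rewrite mulr_gt0 ?exprn_gt0 | by rewrite exprn_gt0 // ltr_wpDr |].
apply: le_trans (pow_split _ t0) _; rewrite -mulrA ler_pM2l ?exprn_gt0 //.
apply: le_trans (_ : _ <= K0 * (1 + (k * t `^ cexp R) ^+ M.+1 / F)) _; last first.
  by rewrite ler_pM2l.
rewrite exprMn P mulrDr mulr1.
have e : K0 * (k ^+ M.+1 * t ^+ q.+1 / F) = t ^+ q.+1 * (k ^+ M.+1 / F + 1).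
  by rewrite /K0; field; rewrite ?gt_eqF.
rewrite e; apply: lerD; first by rewrite /K0 lerDl divr_ge0 ?ltW.
rewrite ler_peMr ?exprn_ge0 // lerDr divr_ge0 ?ltW //.
Qed.

End Decay.

Section Terms.
Variables (R : realType) (nu : nat).

Lemma rnorm_ge0 (m : pt nu) : 0 <= rnorm R m.
Proof. exact: ler0n. Qed.

Lemma rnorm_split (n m : pt nu) : rnorm R n <= rnorm R m + rnorm R (ptsub n m).
Proof. by rewrite /rnorm -natrD ler_nat maxnorm_split. Qed.

Lemma Dc_bound : exists2 K, 0 <= K & forall (sigma : R) (n m : pt nu), 4^-1 <= sigma ->
  Dc_term sigma n m <= K * (Fw R m + Fw R (ptsub n m)).
Proof.
set c := cexp R.
have c0 : 0 < c := cexp_gt0 R.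
have c1 : c < 1 := cexp_lt1 R.
set g := 1 - 2 `^ (c - 1).
have g0 : 0 < g by rewrite /g subr_gt0 two_powR_lt1.
have [K K0 HK] := @decay R (g / 4) nu (divr_gt0 g0 (ltr0n _ 4)).
exists K; first exact: ltW.
move=> sigma n m s4.
have s0 : 0 < sigma by apply: lt_le_trans s4; rewrite invr_gt0 ltr0n.
set a := rnorm R m; set b := rnorm R (ptsub n m); set N := rnorm R n.
have a0 : 0 <= a := rnorm_ge0 _. have b0 : 0 <= b := rnorm_ge0 _.
have Nab : N <= a + b := rnorm_split n m.
have NP : N `^ c <= (a + b) `^ c.
  apply: ge0_ler_powR => //; first exact: ltW.
  - by rewrite qualifE /=; exact: rnorm_ge0.
  - by rewrite qualifE /=; exact: addr_ge0.
rewrite /Dc_term -/a -/b -/N -/c -(expRD (sigma * a `^ c)) -expRB.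
have key : forall x y : R, 0 <= x -> x <= y -> N `^ c <= (x + y) `^ c ->
    expR (sigma * N `^ c - (sigma * x `^ c + sigma * y `^ c)) <= expR (- (g / 4 * x `^ c)).
  move=> x y x0 xy Nxy; rewrite ler_expR.
  have G := powR_gain c0 c1 x0 xy.
  have xc : 0 <= x `^ c := powR_ge0 _ _.
  have : sigma * (N `^ c - x `^ c - y `^ c) <= sigma * (- (g * x `^ c)).
    by rewrite ler_pM2l //; rewrite /g; lra.
  have : 4^-1 * (g * x `^ c) <= sigma * (g * x `^ c).
    by apply: ler_wpM2r => //; apply: mulr_ge0 => //; exact: ltW.
  lra.
have Fa := HK a a0; have Fb := HK b b0.
have Fwa : Fw R m = ((1 + a) ^+ nu.+1)^-1 by [].
have Fwb : Fw R (ptsub n m) = ((1 + b) ^+ nu.+1)^-1 by [].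
have Fa0 : 0 <= Fw R m := Fw_ge0 _ _. have Fb0 : 0 <= Fw R (ptsub n m) := Fw_ge0 _ _.
have [ab|ba] := lerP a b.
- apply: le_trans (key a b a0 ab NP) _; apply: le_trans Fa _.
  by rewrite -Fwa ler_pM2l // lerDl.
- have : N `^ c <= (b + a) `^ c by rewrite addrC.
  move/(key b a b0 (ltW ba)) => H.
  have -> : sigma * N `^ c - (sigma * a `^ c + sigma * b `^ c)
          = sigma * N `^ c - (sigma * b `^ c + sigma * a `^ c) by rewrite (addrC (_ * a `^ c)).
  apply: le_trans H _; apply: le_trans Fb _.
  by rewrite -Fwb ler_pM2l // lerDr.
Qed.

End Terms.

Section D1.
Variables (R : realType) (nu : nat).

Lemma powsum_le (x y : R) q : 0 <= x -> 0 <= y ->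
  (x + y) ^+ q <= 2 ^+ q * (x ^+ q + y ^+ q).
Proof.
move=> x0 y0.
have H (u v : R) : 0 <= u -> u <= v -> (u + v) ^+ q <= 2 ^+ q * (u ^+ q + v ^+ q).
  move=> u0 uv; apply: (@le_trans _ _ ((2 * v) ^+ q)).
    by apply: lerXn2r; rewrite ?qualifE /= ?addr_ge0 ?mulr_ge0 //; try lra.
  by rewrite exprMn ler_pM2l ?exprn_gt0 // lerDr exprn_ge0.
have [xy|yx] := lerP x y; first exact: H.
by rewrite addrC (addrC (x ^+ q)); apply: H => //; exact: ltW.
Qed.

Lemma D1_bound (sigma : R) (n m : pt nu) : 0 <= sigma ->
  D1_term sigma n m <= 2 ^+ nu.+1 * (Fw R m + Fw R (ptsub n m)).
Proof.
move=> s0.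
set a := rnorm R m; set b := rnorm R (ptsub n m); set N := rnorm R n.
have a0 : 0 <= a := rnorm_ge0 R m. have b0 : 0 <= b := rnorm_ge0 R (ptsub n m).
have N0 : 0 <= N := rnorm_ge0 R n.
have Nab : N <= a + b := rnorm_split R n m.
set q := nu.+1.
rewrite /D1_term -/a -/b -/N -/q.
set A := 1 + a; set B := 1 + b; set C := 1 + N.
have A0 : 0 < A by rewrite /A; lra.
have B0 : 0 < B by rewrite /B; lra.
have C0 : 0 < C by rewrite /C; lra.
have -> : C ^+ q * expR (sigma * N) / (A ^+ q * expR (sigma * a) * (B ^+ q * expR (sigma * b)))
   = (C / (A * B)) ^+ q * expR (sigma * N - (sigma * a + sigma * b)).
  rewrite expRB expRD expr_div_n exprMn.
  have : 0 < A ^+ q by rewrite exprn_gt0.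
  have : 0 < B ^+ q by rewrite exprn_gt0.
  have : 0 < expR (sigma * a) := expR_gt0 _.
  have : 0 < expR (sigma * b) := expR_gt0 _.
  move: (A ^+ q) (B ^+ q) (expR (sigma * a)) (expR (sigma * b)) (C ^+ q) (expR (sigma * N)).
  move=> x y z t u v t0 z0 y0 x0; field.
  by rewrite !gt_eqF.
have E1 : expR (sigma * N - (sigma * a + sigma * b)) <= 1.
  rewrite expR_le1; have : sigma * N <= sigma * (a + b) by rewrite ler_wpM2l.
  lra.
have E2 : C / (A * B) <= A^-1 + B^-1.
  rewrite ler_pdivrMr ?mulr_gt0 //.
  have -> : (A^-1 + B^-1) * (A * B) = B + A by field; rewrite !gt_eqF.
  rewrite /A /B /C; lra.
have Fwa : Fw R m = A^-1 ^+ q by rewrite exprVn.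
have Fwb : Fw R (ptsub n m) = B^-1 ^+ q by rewrite exprVn.
rewrite Fwa Fwb.
apply: (@le_trans _ _ ((C / (A * B)) ^+ q)).
  rewrite -[X in _ <= X]mulr1; apply: ler_wpM2l => //.
  by rewrite exprn_ge0 // divr_ge0 ?mulr_ge0 ?ltW.
have iA : 0 <= A^-1 by rewrite invr_ge0 ltW.
have iB : 0 <= B^-1 by rewrite invr_ge0 ltW.
apply: le_trans (powsum_le q iA iB).
have cab : 0 <= C / (A * B) by apply: divr_ge0; [exact: ltW | apply: mulr_ge0; exact: ltW].
apply: lerXn2r => //; rewrite qualifE /= ?addr_ge0 //.
Qed.

End D1.

Section DN.
Variables (R : realType) (nu : nat).

Lemma esum_le (f : pt nu -> R) (K : R) :
  (forall s, uniq s -> \sum_(m <- s) f m <= K) ->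
  (esum [set: pt nu] (fun m => (f m)%:E) <= K%:E)%E.
Proof.
move=> H; apply: ge_ereal_sup => x [A [finA _] <-].
rewrite fsbig_finite // sumEFin lee_fin; apply: H; exact: finmap.fset_uniq.
Qed.

Lemma DN_ge1 : 1 <= D_N R nu.
Proof.
set L := (2 * (1 + nu%:R) : R) ^+ nu.
have [Kc Kc0 HKc] := Dc_bound R nu.
have Bc : (D_nu_c R nu <= (Kc * (L + L))%:E)%E.
  apply: ge_ereal_sup => x [n [sigma [s4 ->]]]; apply: esum_le => s us.
  apply: (@le_trans _ _ (\sum_(m <- s) Kc * (Fw R m + Fw R (ptsub n m)))).
    by apply: ler_sum => m _; exact: HKc.
  rewrite -mulr_sumr big_split /= ler_wpM2l //.
  by apply: lerD; [exact: lattice_sum | exact: lattice_sum_tr].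
have B1 : (D_nu_1 R nu <= (2 ^+ nu.+1 * (L + L))%:E)%E.
  apply: ge_ereal_sup => x [n [sigma [s4 ->]]]; apply: esum_le => s us.
  have s0 : 0 <= sigma by apply: le_trans s4; rewrite invr_ge0 ler0n.
  apply: (@le_trans _ _ (\sum_(m <- s) 2 ^+ nu.+1 * (Fw R m + Fw R (ptsub n m)))).
    by apply: ler_sum => m _; exact: D1_bound.
  rewrite -mulr_sumr big_split /= ler_wpM2l ?exprn_ge0 //.
  by apply: lerD; [exact: lattice_sum | exact: lattice_sum_tr].
have Gc : (1 <= D_nu_c R nu)%E.
  apply: (@le_trans _ _ (esum [set: pt nu] (fun m => (Dc_term (4^-1 : R) 0 m)%:E))).
    apply: esum_ge; exists [set (0 : pt nu)]%classic; first by split; [exact: finite_set1 |].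
    rewrite fsbig_set1 lee_fin /Dc_term ptsub0 /rnorm maxnorm0 powR0 ?gt_eqF ?cexp_gt0 //.
    by rewrite mulr0 expR0 !mul1r invr1.
  apply: ereal_sup_ubound; exists 0, 4^-1; split => //.
have G1 : (0 <= D_nu_1 R nu)%E.
  apply: (@le_trans _ _ (esum [set: pt nu] (fun m => (D1_term (4^-1 : R) 0 m)%:E))).
    apply: esum_ge0 => m _; rewrite lee_fin /D1_term.
    by rewrite divr_ge0 ?mulr_ge0 ?exprn_ge0 ?expR_ge0 ?addr_ge0 ?ler0n.
  apply: ereal_sup_ubound; exists 0, 4^-1; split => //.
have fc : D_nu_c R nu \is a fin_num.
  by rewrite ge0_fin_numE ?(le_lt_trans Bc) ?ltry // (le_trans _ Gc).
have f1 : D_nu_1 R nu \is a fin_num.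
  by rewrite ge0_fin_numE ?(le_lt_trans B1) ?ltry.
rewrite /D_N -(fineK fc) -(fineK f1) -EFin_max /=.
have : 1 <= fine (D_nu_c R nu) by rewrite -lee_fin fineK.
move=> h; apply: le_trans h _; by rewrite le_max lexx.
Qed.

End DN.

Section W.
Variables (R : realType) (nu : nat).
Implicit Types m n k j : pt nu.

Definition pc m : R := rnorm R m `^ cexp R.

Lemma pc_ge0 m : 0 <= pc m. Proof. exact: powR_ge0. Qed.

Lemma pc_tri m k n : pc (ptsub m n) <= pc (ptsub m k) + pc (ptsub k n).
Proof.
rewrite /pc; apply: le_trans (powR_subadd (cexp_gt0 R) (cexp_lt1 R) (ler0n _ _) (ler0n _ _)).
apply: ge0_ler_powR.
- exact: ltW (cexp_gt0 R).
- by rewrite qualifE /= ler0n.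
- by rewrite qualifE /= addr_ge0 ?ler0n.
- by rewrite /rnorm -natrD ler_nat maxnorm_tri.
Qed.

Lemma wE (s : R) m : w s m = D_N R nu * expR (s * pc m).
Proof. by []. Qed.

Lemma DN1 : 1 <= D_N R nu. Proof. exact: DN_ge1. Qed.

Lemma w_ge1 (s : R) m : 0 <= s -> 1 <= w s m.
Proof.
move=> s0; rewrite wE -[1]mulr1; apply: ler_pM => //; first exact: DN1.
by rewrite -expR0 ler_expR mulr_ge0 // pc_ge0.
Qed.

Lemma w_ge0 (s : R) m : 0 <= w s m.
Proof. by rewrite wE mulr_ge0 ?expR_ge0 // (le_trans _ DN1). Qed.

Lemma w_mono (s1 s2 : R) m : s1 <= s2 -> w s1 m <= w s2 m.
Proof.
move=> s12; rewrite !wE ler_wpM2l ?(le_trans _ DN1) // ler_expR.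
by apply: ler_wpM2r => //; exact: pc_ge0.
Qed.

Lemma w_sub (s : R) m k n : 0 <= s ->
  w s (ptsub m n) <= w s (ptsub m k) * w s (ptsub k n).
Proof.
move=> s0; rewrite !wE.
have D1 := DN1.
rewrite mulrACA -expRD; apply: ler_pM.
- exact: le_trans D1.
- exact: expR_ge0.
- by rewrite ler_peMl ?(le_trans _ D1).
- by rewrite ler_expR -mulrDr ler_wpM2l // pc_tri.
Qed.

Lemma w_split (st s mu l : R) k j n :
  0 <= st -> 0 <= mu -> st + mu <= s -> 0 < l -> l <= rnorm R (ptsub n k) ->
  w st (ptsub k n) <=
  expR (- (mu * l `^ cexp R)) * (w s (ptsub k j) * w (st + mu) (ptsub j n)).
Proof.
move=> st0 mu0 sm l0 lk.
have D1 := DN1.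
rewrite !wE.
rewrite (_ : _ * (_ * _) = (D_N R nu * D_N R nu) * expR (- (mu * l `^ cexp R) +
   (s * pc (ptsub k j) + (st + mu) * pc (ptsub j n)))); last by rewrite !expRD; ring.
apply: ler_pM.
- exact: le_trans D1.
- exact: expR_ge0.
- by rewrite ler_peMl ?(le_trans _ D1).
rewrite ler_expR.
have lx : l `^ cexp R <= pc (ptsub k n).
  rewrite /pc /rnorm maxnorm_sym; apply: ge0_ler_powR => //.
  - exact: ltW (cexp_gt0 R).
  - by rewrite qualifE /= ltW.
  - by rewrite qualifE /= ler0n.
have T := pc_tri k j n.
have y0 := pc_ge0 (ptsub k j).
have z0 := pc_ge0 (ptsub j n).
have h1 : mu * l `^ cexp R <= mu * pc (ptsub k n) by rewrite ler_wpM2l.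
have h2 : (st + mu) * pc (ptsub k n) <= (st + mu) * (pc (ptsub k j) + pc (ptsub j n)).
  by rewrite ler_wpM2l // addr_ge0.
have h3 : (st + mu) * pc (ptsub k j) <= s * pc (ptsub k j) by rewrite ler_wpM2r.
lra.
Qed.

End W.

Section Col.
Variables (R : realType) (nu : nat).
Implicit Types (S : seq (pt nu)) (A : pt nu -> pt nu -> R).

Definition colw (s : R) S A n := \sum_(m <- S) w s (ptsub m n) * `|A m n|.

Lemma col_ge0 s S A n : 0 <= colw s S A n.
Proof. by apply: sumr_ge0 => m _; rewrite mulr_ge0 ?w_ge0. Qed.

Lemma col_le_mnorm s S A n : n \in S -> colw s S A n <= mnorm s S A.
Proof. by move=> nS; exact: (le_bigmax_seq 0 n xpredT (colw s S A) nS isT). Qed.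

Lemma mnorm_ge0 s S A : 0 <= mnorm s S A.
Proof.
change (0 <= \big[Num.max/0]_(n <- S) colw s S A n); move: (colw s S A) => F.
elim: S => [|x S IH]; rewrite ?big_nil // big_cons.
by rewrite le_max IH orbT.
Qed.

Lemma mnorm_le s S A X : 0 <= X -> (forall n, n \in S -> colw s S A n <= X) ->
  mnorm s S A <= X.
Proof.
move=> X0 H; rewrite /mnorm big_seq_cond; apply: bigmax_le => // n /andP[nS _].
exact: H.
Qed.

Lemma sum_restrict (S S' : seq (pt nu)) (f : pt nu -> R) :
  uniq S -> uniq S' -> {subset S' <= S} ->
  \sum_(j <- S) (if j \in S' then f j else 0) = \sum_(j <- S') f j.
Proof.
move=> uS uS' sub; rewrite -big_mkcond -big_filter; apply: perm_big.
apply: uniq_perm; rewrite ?filter_uniq // => x; rewrite mem_filter.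
by case: (boolP (x \in S')) => // /sub ->.
Qed.

Lemma sum_nth (S : seq (pt nu)) (f : pt nu -> R) :
  \sum_(x <- S) f x = \sum_(i < size S) f (nth 0 S i).
Proof. by rewrite (big_nth 0) big_mkord. Qed.

End Col.

Unset Implicit Arguments. Set Strict Implicit.

Theorem lemma15 (R : realType) (nu : nat) (sigma sigmat : R)
  (Lambda : seq (pt nu)) (T D Rm : pt nu -> pt nu -> R)
  (l mu Cn : pt nu -> R) (U : pt nu -> seq (pt nu)) :
  4^-1 <= sigmat -> sigmat <= sigma ->
  uniq Lambda ->
  (forall m n, m \in Lambda -> n \in Lambda -> T m n = D m n + Rm m n) ->
  (forall m n, m \in Lambda -> n \in Lambda -> m != n -> D m n = 0) ->
  (forall n, n \in Lambda ->
     [/\ 0 < l n, 0 <= mu n, mu n <= sigma - sigmat & 0 < Cn n] /\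
     [/\ uniq (U n), {subset U n <= Lambda} & n \in U n]) ->
  (forall n, n \in Lambda -> exists B, inverse_on (U n) T B /\
         mnorm (sigmat + mu n) (U n) B <= Cn n) ->
  (forall n m, n \in Lambda -> m \in Lambda -> m \notin U n ->
         l n <= rnorm R (ptsub n m)) ->
  (forall n, n \in Lambda ->
     Cn n * expR (- (mu n * powR (l n) (cexp R))) * mnorm sigma Lambda Rm <= 2^-1) ->
  exists B, inverse_on Lambda T B /\
    mnorm sigmat Lambda B <=
      (1 + w sigmat (0 : pt nu)) * \big[Order.max/0]_(n <- Lambda) Cn n.
Proof.
move=> s4 sts uL HTD HD HU HB Hl Hsmall.
have st0 : 0 <= sigmat by apply: le_trans s4; rewrite invr_ge0 ler0n.
have [Bf HBf] : exists Bf : pt nu -> pt nu -> pt nu -> R, forall n, n \in Lambda ->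
   inverse_on (U n) T (Bf n) /\ mnorm (sigmat + mu n) (U n) (Bf n) <= Cn n.
  have := @choice (pt nu) (pt nu -> pt nu -> R) (fun n B => n \in Lambda ->
     inverse_on (U n) T B /\ mnorm (sigmat + mu n) (U n) B <= Cn n).
  case=> [n|f Hf]; last by exists f.
  case: (boolP (n \in Lambda)) => nL; first by have [B HB'] := HB n nL; exists B.
  by exists (fun _ _ => 0).
set C := \big[Order.max/0]_(n <- Lambda) Cn n.
have CnC : forall n, n \in Lambda -> Cn n <= C.
  by move=> n nL; exact: (le_bigmax_seq 0 n xpredT Cn nL isT).
have C0 : 0 <= C.
  rewrite /C; elim: Lambda {uL HTD HD HU HB Hl Hsmall HBf CnC C} => [|x L IH].
    by rewrite big_nil.
  by rewrite big_cons le_max IH orbT.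
pose Q m n := if m \in U n then Bf n m n else 0.
pose E k n := \sum_(j <- Lambda) T k j * Q j n - (k == n)%:R.
have TQ : forall k n, n \in Lambda ->
    \sum_(j <- Lambda) T k j * Q j n = \sum_(j <- U n) T k j * Bf n j n.
  move=> k n nL; have [_ [uU sU nU]] := HU n nL.
  rewrite -(sum_restrict (fun j => T k j * Bf n j n) uL uU sU).
  by apply: eq_bigr => j _; rewrite /Q; case: ifP => _; rewrite ?mulr0.
have Ein : forall k n, n \in Lambda -> k \in U n -> E k n = 0.
  move=> k n nL kU; have [_ [uU sU nU]] := HU n nL.
  rewrite /E TQ //; have [h _] := (HBf n nL).1 k n kU nU.
  by rewrite h subrr.
have Eout : forall k n, n \in Lambda -> k \in Lambda -> k \notin U n ->
    E k n = \sum_(j <- U n) Rm k j * Bf n j n.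
  move=> k n nL kL kU; have [_ [uU sU nU]] := HU n nL.
  have kn : (k == n) = false by apply/negbTE; apply: contraNneq kU => ->.
  rewrite /E TQ // kn subr0; apply: eq_big_seq => j jU.
  have jL := sU j jU.
  have kj : k != j by apply: contraNneq kU => ->.
  by rewrite HTD // HD // add0r.
have Ecol : forall n, n \in Lambda -> colw sigmat Lambda E n <= 2^-1.
  move=> n nL; have [[l0 mu0 mus Cn0] [uU sU nU]] := HU n nL.
  set eps := expR (- (mu n * l n `^ cexp R)).
  set Bn := Bf n.
  pose F k j := (w sigma (ptsub k j) * `|Rm k j|) * (w (sigmat + mu n) (ptsub j n) * `|Bn j n|).
  have F0 : forall k j, 0 <= F k j.
    by move=> k j; rewrite /F; apply: mulr_ge0; apply: mulr_ge0; (exact: w_ge0 || exact: normr_ge0).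
  have step1 : forall k, k \in Lambda -> w sigmat (ptsub k n) * `|E k n| <=
      eps * \sum_(j <- U n) F k j.
    move=> k kL.
    case: (boolP (k \in U n)) => kU.
      rewrite Ein // normr0 mulr0 mulr_ge0 ?expR_ge0 //.
      by apply: sumr_ge0 => j _; exact: F0.
    rewrite Eout //.
    apply: (le_trans (ler_wpM2l (w_ge0 _ _) (ler_norm_sum _ _ _))).
    rewrite !mulr_sumr; apply: ler_sum => j _.
    rewrite normrM /F (_ : eps * _ = (eps * (w sigma (ptsub k j) * w (sigmat + mu n) (ptsub j n)))
        * (`|Rm k j| * `|Bn j n|)); last by ring.
    apply: ler_wpM2r; first by rewrite mulr_ge0.
    apply: w_split => //; first by lra.
    exact: Hl.
  apply: le_trans (_ : _ <= \sum_(k <- Lambda) eps * \sum_(j <- U n) F k j) _.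
    rewrite /colw big_seq [X in _ <= X]big_seq; apply: ler_sum => k kL; exact: step1.
  rewrite -mulr_sumr exchange_big /=.
  apply: le_trans (_ : _ <= eps * (mnorm sigma Lambda Rm * colw (sigmat + mu n) (U n) Bn n)) _.
    apply: ler_wpM2l; first exact: expR_ge0.
    rewrite /colw mulr_sumr big_seq [X in _ <= X]big_seq; apply: ler_sum => j jU.
    rewrite /F -mulr_suml.
    apply: ler_wpM2r; first by rewrite mulr_ge0 ?w_ge0.
    exact: (col_le_mnorm _ _ (sU j jU)).
  have c1 := col_le_mnorm (sigmat + mu n) Bn nU.
  have c2 := (HBf n nL).2.
  have M0 := mnorm_ge0 sigma Lambda Rm.
  have e0 : 0 <= eps := expR_ge0 _.
  apply: le_trans (Hsmall n nL).
  rewrite -/eps (mulrC (Cn n)) -mulrA; apply: ler_wpM2l => //.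
  rewrite mulrC; apply: ler_wpM2r => //; exact: le_trans c1 c2.
have Eabs : forall n, n \in Lambda -> \sum_(k <- Lambda) `|E k n| <= 2^-1.
  move=> n nL; apply: le_trans (Ecol n nL); apply: ler_sum => k _.
  by rewrite ler_peMl // w_ge1.
have [Lnil|Lne] := eqVneq Lambda [::].
  exists (fun _ _ => 0); split.
    by move=> m n; rewrite Lnil.
  by rewrite /mnorm /C Lnil !big_nil mulr0.
have [N sz] : exists N, size Lambda = N.+1.
  exists (size Lambda).-1; rewrite prednK // lt0n size_eq0; exact: Lne.
pose Lam (i : 'I_N.+1) := nth 0 Lambda i.
pose idx (x : pt nu) : 'I_N.+1 := inord (index x Lambda).
have LamL : forall i, Lam i \in Lambda by move=> i; rewrite mem_nth // sz.
have idxK : forall x, x \in Lambda -> Lam (idx x) = x.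
  by move=> x xL; rewrite /Lam /idx inordK ?nth_index // -sz index_mem.
have idxL : forall i, idx (Lam i) = i.
  by move=> i; apply: val_inj; rewrite /= inordK index_uniq // ?sz.
have sumL : forall f : pt nu -> R, \sum_(x <- Lambda) f x = \sum_(i < N.+1) f (Lam i).
  by move=> f; rewrite (big_nth 0) sz big_mkord.
have idx_eq : forall x y, x \in Lambda -> y \in Lambda -> (idx x == idx y) = (x == y).
  move=> x y xL yL; apply/eqP/eqP => [h|->//].
  by rewrite -(idxK x xL) -(idxK y yL) h.
have Lam_eq : forall i j, (Lam i == Lam j) = (i == j).
  by move=> i j; rewrite /Lam nth_uniq ?sz.
pose TM := \matrix_(i, j) T (Lam i) (Lam j) : 'M[R]_N.+1.
pose QM := \matrix_(i, j) Q (Lam i) (Lam j) : 'M[R]_N.+1.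
pose EM := \matrix_(i, j) E (Lam i) (Lam j) : 'M[R]_N.+1.
have TQM : TM *m QM = 1%:M + EM.
  apply/matrixP => i j; rewrite !mxE.
  under eq_bigr do rewrite !mxE.
  rewrite -(sumL (fun x => T (Lam i) x * Q x (Lam j))) /E Lam_eq.
  by rewrite addrC subrK.
have Ecolsum : forall j : 'I_N.+1, \sum_(i < N.+1) `|E (Lam i) (Lam j)| <= 2^-1.
  by move=> j; rewrite -(sumL (fun x => `|E x (Lam j)|)); exact: Eabs.
have inj : forall v : 'rV[R]_N.+1, v *m (1%:M + EM)^T = 0 -> v = 0.
  move=> v Hv.
  have e : forall i, v 0 i = - \sum_j v 0 j * E (Lam i) (Lam j).
    move=> i; have := congr1 (fun M : 'rV[R]_N.+1 => M 0 i) Hv; rewrite !mxE.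
    under eq_bigr do rewrite !mxE mulrDr.
    rewrite big_split /= (bigD1 i) //= eqxx mulr1n mulr1.
    rewrite (@big1 _ _ _ _ _ _ (fun j => v 0 j * (i == j)%:R)) => [|j ji]; last first.
      by rewrite eq_sym (negbTE ji) mulr0n mulr0.
    by rewrite addr0 => /eqP; rewrite addr_eq0 => /eqP.
  set S := \sum_i `|v 0 i|.
  have S0 : 0 <= S by apply: sumr_ge0 => i _; exact: normr_ge0.
  have SS : S <= S * 2^-1.
    rewrite {1}/S; under eq_bigr do rewrite e normrN.
    apply: le_trans (ler_sum _ (fun i _ => ler_norm_sum _ _ _)) _.
    rewrite exchange_big /= /S mulr_suml; apply: ler_sum => j _.
    under eq_bigr do rewrite normrM.
    by rewrite -mulr_sumr; apply: ler_wpM2l => //; exact: Ecolsum.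
  have Sle0 : S <= 0 by lra.
  apply/rowP => i; rewrite mxE; apply/eqP; rewrite -normr_eq0 eq_le normr_ge0 andbT.
  apply: le_trans Sle0; rewrite /S (bigD1 i) //= lerDl.
  by apply: sumr_ge0 => j _; exact: normr_ge0.
have U1 : (1%:M + EM) \in unitmx.
  rewrite -unitmx_tr -row_free_unit.
  set M := (1%:M + EM)^T.
  have K0 : kermx M = 0.
    apply/row_matrixP => i; rewrite row0; apply: inj.
    by rewrite -row_mul mulmx_ker row0.
  have := mxrank_ker M; rewrite K0 mxrank0 => /esym/eqP; rewrite subn_eq0 => h.
  by rewrite /row_free eqn_leq h rank_leq_row.
have UT : TM \in unitmx by move: U1; rewrite -TQM unitmx_mul => /andP[].
pose BM := invmx TM.
pose Bfun (m n : pt nu) := BM (idx m) (idx n).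
have BQ : forall m n, m \in Lambda -> n \in Lambda ->
    Bfun m n + \sum_(k <- Lambda) Bfun m k * E k n = Q m n.
  have M1 : BM + BM *m EM = QM.
    by rewrite -{1}[BM]mulmx1 -mulmxDr -TQM mulmxA mulVmx // mul1mx.
  move=> m n mL nL; have := congr1 (fun M : 'M[R]_N.+1 => M (idx m) (idx n)) M1.
  rewrite !mxE idxK // idxK // => <-; congr (_ + _).
  by rewrite sumL; apply: eq_bigr => i _; rewrite mxE idxK // /Bfun idxL.
exists Bfun; split.
  move=> m n mL nL; split.
  - rewrite sumL; transitivity ((TM *m BM) (idx m) (idx n)).
      by rewrite mxE; apply: eq_bigr => i _; rewrite mxE idxK // /Bfun idxL.
    by rewrite mulmxV // mxE idx_eq.
  - rewrite sumL; transitivity ((BM *m TM) (idx m) (idx n)).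
      by rewrite mxE; apply: eq_bigr => i _; rewrite mxE idxK // /Bfun idxL.
    by rewrite mulVmx // mxE idx_eq.
have colQ : forall n, n \in Lambda -> colw sigmat Lambda Q n <= C.
  move=> n nL; have [[l0 mu0 mus Cn0] [uU sU nU]] := HU n nL.
  apply: le_trans (CnC n nL); apply: le_trans (HBf n nL).2.
  apply: le_trans (col_le_mnorm _ _ nU).
  rewrite /colw.
  have -> : \sum_(m <- Lambda) w sigmat (ptsub m n) * `|Q m n| =
            \sum_(m <- U n) w sigmat (ptsub m n) * `|Bf n m n|.
    rewrite -(sum_restrict (fun m => w sigmat (ptsub m n) * `|Bf n m n|) uL uU sU).
    by apply: eq_bigr => m _; rewrite /Q; case: ifP; rewrite ?normr0 ?mulr0.
  apply: ler_sum => m _; apply: ler_wpM2r => //; apply: w_mono; lra.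
set MB := mnorm sigmat Lambda Bfun.
have MB0 : 0 <= MB := mnorm_ge0 _ _ _.
have key : MB <= C + 2^-1 * MB.
  apply: mnorm_le; first by rewrite addr_ge0 ?mulr_ge0.
  move=> n nL.
  have H1 : forall m, m \in Lambda -> w sigmat (ptsub m n) * `|Bfun m n| <=
      w sigmat (ptsub m n) * `|Q m n| + \sum_(k <- Lambda)
        (w sigmat (ptsub m k) * `|Bfun m k|) * (w sigmat (ptsub k n) * `|E k n|).
    move=> m mL.
    have eB : Bfun m n = Q m n - \sum_(k <- Lambda) Bfun m k * E k n.
      by rewrite -(BQ m n mL nL) addrK.
    rewrite eB; apply: le_trans (ler_wpM2l (w_ge0 _ _) (ler_normB _ _)) _.
    rewrite mulrDr lerD2l.
    apply: le_trans (ler_wpM2l (w_ge0 _ _) (ler_norm_sum _ _ _)) _.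
    rewrite mulr_sumr; apply: ler_sum => k _.
    rewrite normrM (_ : _ * _ * (_ * _) = (w sigmat (ptsub m k) * w sigmat (ptsub k n))
        * (`|Bfun m k| * `|E k n|)); last by ring.
    by apply: ler_wpM2r; [rewrite mulr_ge0 | exact: w_sub].
  rewrite /colw; apply: le_trans (_ : _ <= \sum_(m <- Lambda) (w sigmat (ptsub m n) * `|Q m n| +
      \sum_(k <- Lambda) (w sigmat (ptsub m k) * `|Bfun m k|) * (w sigmat (ptsub k n) * `|E k n|))) _.
    by rewrite big_seq [X in _ <= X]big_seq; apply: ler_sum => m mL; exact: H1.
  rewrite big_split /=; apply: lerD; first exact: colQ.
  rewrite exchange_big /=.
  under eq_bigr do rewrite -mulr_suml.
  apply: le_trans (_ : _ <= \sum_(k <- Lambda) MB * (w sigmat (ptsub k n) * `|E k n|)) _.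
    rewrite big_seq [X in _ <= X]big_seq; apply: ler_sum => k kL.
    apply: ler_wpM2r; first by rewrite mulr_ge0 ?w_ge0.
    exact: (col_le_mnorm _ _ kL).
  rewrite -mulr_sumr mulrC; apply: ler_wpM2r => //; exact: Ecol.
have W1 : 1 <= w sigmat (0 : pt nu) by exact: w_ge1.
have h : 0 <= (w sigmat (0 : pt nu) - 1) * C by apply: mulr_ge0; lra.
nra.
Qed.
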